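(* Let $\gamma>\frac{4}{\sqrt n}$ and $B>\gamma\sqrt n$. For every input stream $a\in\{-1,0,1\}^n$, the output of algorithm $\mathsf{Apr}$ (with parameters $\gamma,B$) satisfies, with probability at least $1-\frac{1}{n^3}$ over its private randomness $r$, $$\Big|\mathsf{Apr}(a,r)-\sum_{j=1}^n a_j\Big|\le\frac{\gamma}{2}\sqrt n .$$ Consequently, for every distribution $\mathcal D$ on $\{-1,0,1\}^n$, $\mathbb E_{a\sim\mathcal D,r}\big[(\mathsf{Apr}(a,r)-\sum_{j=1}^n a_j)^2\big]\le\gamma^2 n$.
   Context: Algorithm $\mathsf{Apr}$ (logs base 2): set $p=\min\{6000\log^2 n\cdot\frac{B}{\gamma^2 n},1\}$ and counters $\Delta=\zeta=\Gamma=0$. For $j=1,\dots,n$: if $\zeta<20\log n\cdot pB$, draw an independent bit $r_j$ equal to $1$ with probability $p$, and if $r_j=1$ set $\Delta\leftarrow\Delta+a_j$ and $\zeta\leftarrow\zeta+\mathbb 1_{a_j\ne0}$; otherwise (if $\zeta\ge20\log n\cdot pB$) set $\Gamma\leftarrow\Gamma+a_j$. Output $\max\{\min\{\Delta/p+\Gamma,n\},-n\}$. *)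

(* Defs.v *)
From HB Require Import structures.
From mathcomp Require Import all_boot all_order all_algebra.
From mathcomp Require Import reals exp.
Set Implicit Arguments. Unset Strict Implicit. Unset Printing Implicit Defensive.
Import Order.TTheory GRing.Theory Num.Theory.
Local Open Scope ring_scope.

Section Apr.
Variable R : realType.

Definition log2 (x : R) : R := ln x / ln 2.

Definition tval (t : 'I_3) : R := (nat_of_ord t)%:R - 1.

Definition stream (n : nat) := {ffun 'I_n -> 'I_3}.
Definition aval n (a : stream n) (j : 'I_n) : R := tval (a j).
Definition true_sum n (a : stream n) : R := \sum_(j < n) aval a j.

Definition apr_p (n : nat) (gamma B : R) : R :=
  Num.min (6000 * (log2 n%:R) ^+ 2 * B / (gamma ^+ 2 * n%:R)) 1.

Definition apr_thr (n : nat) (gamma B : R) : R :=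
  20 * log2 n%:R * apr_p n gamma B * B.

Definition apr_step (thr : R) (s : R * nat * R) (x : R * bool) : R * nat * R :=
  let: (D, z, G) := s in
  let: (aj, rj) := x in
  if z%:R < thr then
    (if rj then (D + aj, addn z (aj != 0), G) else (D, z, G))
  else (D, z, G + aj).

(* output of Apr on input a with private random bits r (r_j is read only
   when zeta < threshold, exactly as in the algorithm) *)
Definition Apr (n : nat) (gamma B : R) (a : stream n) (r : {ffun 'I_n -> bool}) : R :=
  let p := apr_p n gamma B in
  let: (D, _, G) :=
    foldl (apr_step (apr_thr n gamma B)) (0, 0%N, 0)
          [seq (aval a j, r j) | j <- enum 'I_n] in
  Num.max (Num.min (D / p + G) n%:R) (- n%:R).

(* probability weight of r : independent Bernoulli(p) bits *)
Definition bern_weight (n : nat) (p : R) (r : {ffun 'I_n -> bool}) : R :=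
  \prod_(j < n) (if r j then p else 1 - p).

Definition prob_r (n : nat) (p : R) (E : pred {ffun 'I_n -> bool}) : R :=
  \sum_(r | E r) bern_weight p r.

Definition exp_r (n : nat) (p : R) (f : {ffun 'I_n -> bool} -> R) : R :=
  \sum_r bern_weight p r * f r.

End Apr.

(* Main.v *)
Require Import Defs.
From HB Require Import structures.
From mathcomp Require Import all_boot all_order all_algebra.
From mathcomp Require Import reals exp sequences.
From mathcomp Require Import ring lra.
Import Order.TTheory GRing.Theory Num.Theory.
Local Open Scope ring_scope.
Set Implicit Arguments. Unset Strict Implicit.

Section Gen.
Variable R : realType.

Definition consf n (b : bool) (r : {ffun 'I_n -> bool}) : {ffun 'I_n.+1 -> bool} :=
  [ffun i => if unlift ord0 i is Some j then r j else b].

Lemma sum_ffunS n (F : {ffun 'I_n.+1 -> bool} -> R) :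
  \sum_r F r = \sum_(b : bool) \sum_(r : {ffun 'I_n -> bool}) F (consf b r).
Proof.
rewrite pair_big /=.
rewrite (reindex (fun br : bool * {ffun 'I_n -> bool} => consf br.1 br.2)) //=.
exists (fun r : {ffun 'I_n.+1 -> bool} => (r ord0, [ffun j => r (lift ord0 j)])).
  move=> [b r] _ /=; congr pair; first by rewrite ffunE unlift_none.
  by apply/ffunP => j; rewrite !ffunE liftK.
move=> r _; apply/ffunP => i; rewrite !ffunE /=.
by case: unliftP => [j ->|->]; rewrite ?ffunE.
Qed.

Lemma bern_consf n (p : R) b (r : {ffun 'I_n -> bool}) :
  bern_weight p (consf b r) = (if b then p else 1 - p) * bern_weight p r.
Proof.
rewrite /bern_weight big_ord_recl !ffunE unlift_none; congr (_ * _).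
by apply: eq_bigr => j _; rewrite ffunE liftK.
Qed.

Lemma map_consf (X : Type) n (a : 'I_n.+1 -> X) b (r : {ffun 'I_n -> bool}) :
  [seq (a j, consf b r j) | j <- enum 'I_n.+1] =
  (a ord0, b) :: [seq (a (lift ord0 j), r j) | j <- enum 'I_n].
Proof.
rewrite enum_ordSl /= ffunE unlift_none -map_comp; congr (_ :: _).
by apply: eq_map => j /=; rewrite ffunE liftK.
Qed.

Lemma supermart (T : Type) (f : T -> R * bool -> T) (Phi : T -> R) (p : R)
  (Q : R -> bool) :
  0 <= p <= 1 ->
  (forall s x, Q x -> p * Phi (f s (x, true)) + (1 - p) * Phi (f s (x, false)) <= Phi s) ->
  forall n (a : 'I_n -> R), (forall j, Q (a j)) -> forall s0,
  \sum_(r : {ffun 'I_n -> bool}) bern_weight p r *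
      Phi (foldl f s0 [seq (a j, r j) | j <- enum 'I_n]) <= Phi s0.
Proof.
move=> /andP[p0 p1] HP; elim=> [|n IH] a Ha s0.
  rewrite (big_pred1 [ffun i => false]); last first.
    by move=> r /=; apply/esym/eqP/ffunP => -[].
  by rewrite /bern_weight big_ord0 mul1r enum_ord0.
rewrite sum_ffunS big_bool /=.
under eq_bigr => r _ do rewrite bern_consf map_consf /= -mulrA.
under [X in _ + X <= _]eq_bigr => r _ do rewrite bern_consf map_consf /= -mulrA.
rewrite -!mulr_sumr.
apply: le_trans (HP s0 (a ord0) (Ha ord0)).
apply: lerD; apply: ler_wpM2l; try lra;
  apply: IH => j; exact: Ha.
Qed.

Lemma bern_sum1 n (p : R) : \sum_(r : {ffun 'I_n -> bool}) bern_weight p r = 1 :> R.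
Proof.
rewrite /bern_weight -(bigA_distr_bigA (fun (j : 'I_n) (b : bool) => if b then p else 1 - p)) /=.
by apply: big1 => j _; rewrite big_bool /=; ring.
Qed.


Definition ext_step (thr : R) (s : (R * nat * R) * (R * R)) (x : R * bool) :
  (R * nat * R) * (R * R) :=
  (apr_step thr s.1 x,
   if (s.1.1.2)%:R < thr then (s.2.1 + x.1, s.2.2 + (x.1 != 0)%:R) else s.2).

Lemma ext_proj thr xs s :
  (foldl (ext_step thr) s xs).1 = foldl (apr_step thr) s.1 xs.
Proof. by elim: xs s => [|x xs IH] s //=; rewrite IH. Qed.

Lemma ext_sum thr xs s :
  (foldl (ext_step thr) s xs).2.1 + (foldl (ext_step thr) s xs).1.2 =
  s.2.1 + s.1.2 + \sum_(x <- xs) x.1.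
Proof.
elim: xs s => [|x xs IH] s /=; first by rewrite big_nil addr0.
rewrite IH big_cons; case: s => [[[D z] G] [P N]]; case: x => [y b] /=.
case: ifP => _ /=; last by ring.
by case: b => /=; ring.
Qed.

Lemma fold_inv (T X : Type) (f : T -> X -> T) (I : T -> Prop) :
  (forall s x, I s -> I (f s x)) -> forall xs s, I s -> I (foldl f s xs).
Proof. by move=> H; elim=> [|x xs IH] s //= Is; apply: IH; apply: H. Qed.

Lemma ext_z thr xs s : 0 <= thr -> ((s.1.1.2)%:R < thr + 1 :> R) ->
  ((foldl (ext_step thr) s xs).1.1.2)%:R < thr + 1 :> R.
Proof.
move=> thr0; apply: (fold_inv (I := fun s : (R * nat * R) * (R * R) => ((s.1.1.2)%:R < thr + 1 :> R))) => -[[[D z] G] [P N]] [y b] /= Hz.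
case: ifP => // Hlt; case: b => //=.
rewrite natrD; case: (y != 0) => /=; lra.
Qed.

Lemma markov n (p : R) (E : pred {ffun 'I_n -> bool}) (Phi : {ffun 'I_n -> bool} -> R) c :
  0 <= p <= 1 -> 0 < c -> (forall r, 0 <= Phi r) -> (forall r, E r -> c <= Phi r) ->
  \sum_(r | E r) bern_weight p r <= (\sum_r bern_weight p r * Phi r) / c.
Proof.
move=> /andP[p0 p1] c0 Phi0 HE.
have w0 r : 0 <= bern_weight p r.
  by apply: prodr_ge0 => j _; case: (r j) => //; lra.
rewrite ler_pdivlMr // mulr_suml.
apply: (@le_trans _ _ (\sum_(r | E r) bern_weight p r * Phi r)).
  by apply: ler_sum => r Er; apply: ler_wpM2l => //; apply: HE.
rewrite [X in _ <= X](bigID E) /= lerDl.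
by apply: sumr_ge0 => r _; apply: mulr_ge0.
Qed.

Lemma clamp_le (n : nat) (x s : R) : `|s| <= n%:R ->
  `|Num.max (Num.min x n%:R) (- n%:R) - s| <= `|x - s| /\
  `|Num.max (Num.min x n%:R) (- n%:R) - s| <= 2 * n%:R.
Proof.
move=> hs; have n0 : 0 <= n%:R :> R by [].
move: hs; rewrite ler_norml => /andP[h1 h2].
case: (lerP x n%:R) => hx; [case: (lerP (- n%:R) x) => hy | case: (lerP (- n%:R) n%:R) => hy];
  split; rewrite ler_norml; apply/andP;
  (split; [|]); (case: (lerP 0 (x - s)) => hv;
  [rewrite ?(ger0_norm hv) | rewrite ?(ltr0_norm hv)]); lra.
Qed.

Lemma key_exp (c p : R) : 0 <= p <= 1 ->
  p * expR (c * (1 - p)) + (1 - p) * expR (- (c * p)) <= expR (p * (expR c - 1 - c)).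
Proof.
move=> /andP[p0 p1].
have -> : expR (c * (1 - p)) = expR c * expR (- (c * p)) by rewrite -expRD; congr expR; ring.
have -> : p * (expR c * expR (- (c * p))) + (1 - p) * expR (- (c * p)) =
  expR (- (c * p)) * (1 + p * (expR c - 1)) by ring.
have -> : p * (expR c - 1 - c) = - (c * p) + p * (expR c - 1) by ring.
rewrite expRD; apply: ler_wpM2l; first exact: expR_ge0.
exact: expR_ge1Dx.
Qed.

Lemma small_exp (c : R) : c <= 1/5 -> expR c - 1 - c <= 5/4 * c ^+ 2.
Proof.
move=> hc.
have h1 : 1 - c <= expR (- c) by have := expR_ge1Dx (- c); lra.
have h2 : expR c * expR (- c) = 1 by rewrite -expRD subrr expR0.
have h3 : 0 < expR c := expR_gt0 c.
have h4 : expR c * (1 - c) <= 1 by rewrite -h2; apply: ler_wpM2l; lra.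
nra.
Qed.


Lemma step_exp (p c psi Y Y1 Y2 N N1 u : R) : 0 <= p <= 1 ->
  p * (expR (c * u) - 1 - c * u) <= psi ->
  Y1 = Y + u * (1 - p) -> Y2 = Y - u * p -> N1 = N + 1 ->
  p * expR (c * Y1 - psi * N1) + (1 - p) * expR (c * Y2 - psi * N1)
    <= expR (c * Y - psi * N).
Proof.
move=> hp hpsi -> -> ->.
have -> : c * (Y + u * (1 - p)) - psi * (N + 1) =
   (c * Y - psi * N) + (- psi + (c * u) * (1 - p)) by ring.
have -> : c * (Y - u * p) - psi * (N + 1) =
   (c * Y - psi * N) + (- psi + - ((c * u) * p)) by ring.
move: (c * Y - psi * N) => w.
rewrite !expRD.
have -> : p * (expR w * (expR (- psi) * expR (c * u * (1 - p)))) +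
  (1 - p) * (expR w * (expR (- psi) * expR (- (c * u * p)))) =
  expR w * expR (- psi) *
  (p * expR (c * u * (1 - p)) + (1 - p) * expR (- (c * u * p))) by ring.
rewrite -[X in _ <= X]mulr1 -mulrA; apply: ler_wpM2l; first exact: expR_ge0.
apply: (le_trans (ler_wpM2l (expR_ge0 _) (key_exp (c * u) hp))).
rewrite -expRD expR_le1; lra.
Qed.

Definition Qv (x : R) := (x == -1) || (x == 0) || (x == 1).

Lemma ext_super thr p (Phi : (R * nat * R) * (R * R) -> R) :
  (forall D z G P N, Phi ((D, z, G), (P, N)) = Phi ((D, z, 0), (P, N))) ->
  (forall D z P N x, z%:R < thr -> (x == -1) || (x == 1) ->
     p * Phi ((D + x, z.+1, 0), (P + x, N + 1)) + (1 - p) * Phi ((D, z, 0), (P + x, N + 1))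
       <= Phi ((D, z, 0), (P, N))) ->
  forall s x, Qv x ->
  p * Phi (ext_step thr s (x, true)) + (1 - p) * Phi (ext_step thr s (x, false)) <= Phi s.
Proof.
move=> HG Hpre [[[D z] G] [P N]] x Qx; rewrite /ext_step /=.
case: ifP => hz /=.
  move: Qx; rewrite /Qv -orbA => /or3P[] /eqP ->.
  - rewrite !HG.
    have h1 : (-1 != 0 :> R) by rewrite oppr_eq0 oner_eq0.
    rewrite h1 /= addn1; apply: Hpre => //; by rewrite eqxx.
  - rewrite eqxx /= addn0 !addr0 -mulrDl.
    by rewrite addrC subrK mul1r.
  - rewrite !HG.
    rewrite oner_eq0 /= addn1; apply: Hpre => //; by rewrite eqxx orbT.
by rewrite !HG -mulrDl addrC subrK mul1r.
Qed.


Definition Phi1 (p lam psi : R) (s : (R * nat * R) * (R * R)) :=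
  expR (lam * (s.1.1.1 - p * s.2.1) - psi * s.2.2) +
  expR (- lam * (s.1.1.1 - p * s.2.1) - psi * s.2.2).

Definition Phi2 (p kap : R) (s : (R * nat * R) * (R * R)) :=
  expR (-1 * ((s.1.1.2)%:R - p * s.2.2) - kap * s.2.2).

Definition Phi0 (s : (R * nat * R) * (R * R)) := `|s.1.1.1 - s.2.1|.

Lemma Phi1_super thr p lam psi : 0 <= p <= 1 -> 0 <= lam <= 1/5 ->
  psi = 5/4 * p * lam ^+ 2 ->
  forall s x, Qv x ->
  p * Phi1 p lam psi (ext_step thr s (x, true)) +
  (1 - p) * Phi1 p lam psi (ext_step thr s (x, false)) <= Phi1 p lam psi s.
Proof.
move=> hp hlam hpsi; apply: ext_super => // D z P N x _ hx.
rewrite /Phi1 /= mulrDr [(1 - p) * _]mulrDr addrACA.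
have hx2 : x ^+ 2 = 1 by case/orP: hx => /eqP ->; rewrite ?sqrrN expr1n.
have hb c : c ^+ 2 = lam ^+ 2 -> c <= 1/5 -> p * (expR c - 1 - c) <= psi.
  move=> hc hc5; rewrite hpsi -mulrA [5/4 * _]mulrC -mulrA ler_wpM2l //; first by case/andP: hp.
  by rewrite -hc mulrC; apply: small_exp.
have hxl : lam * x <= 1/5 /\ - lam * x <= 1/5.
  by case/orP: hx => /eqP ->; split; lra.
apply: lerD.
  apply: (@step_exp p lam psi (D - p * P) _ _ N _ x hp).
  - apply: hb; last by case: hxl.
    by rewrite exprMn hx2 mulr1.
  - ring.
  - ring.
  - by [].
apply: (@step_exp p (- lam) psi (D - p * P) _ _ N _ x hp).
- apply: hb; last by case: hxl.
  by rewrite exprMn hx2 mulr1 sqrrN.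
- ring.
- ring.
- by [].
Qed.

Lemma Phi2_super thr p : 0 <= p <= 1 ->
  forall s x, Qv x ->
  p * Phi2 p (p * (expR (-1 * 1) - 1 - (-1 * 1))) (ext_step thr s (x, true)) +
  (1 - p) * Phi2 p (p * (expR (-1 * 1) - 1 - (-1 * 1))) (ext_step thr s (x, false))
    <= Phi2 p (p * (expR (-1 * 1) - 1 - (-1 * 1))) s.
Proof.
move=> hp; apply: ext_super => // D z P N x _ hx.
rewrite /Phi2 /=; apply: (@step_exp p (-1) _ ((z%:R - p * N)) _ _ N _ 1 hp).
- by [].
- rewrite -[z.+1]addn1 natrD; ring.
- ring.
- by [].
Qed.

Lemma Phi0_super thr : forall s x, Qv x ->
  1 * Phi0 (ext_step thr s (x, true)) + (1 - 1) * Phi0 (ext_step thr s (x, false))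
    <= Phi0 s.
Proof.
apply: ext_super => // D z P N x _ hx.
rewrite /Phi0 /= subrr mul0r addr0 mul1r.
by have -> : D + x - (P + x) = D - P by ring.
Qed.


Lemma hQ_aval n (a : stream n) j : Qv (aval R a j).
Proof.
rewrite /aval /Qv; case: (a j) => -[|[|[|k]]] hk; rewrite /Defs.tval /=.
- by rewrite sub0r eqxx.
- by rewrite subrr eqxx orbT.
- by rewrite mulr2n addrK eqxx !orbT.
- by [].
Qed.

Lemma err_2n n (gamma B : R) (a : stream n) r :
  `|Apr gamma B a r - true_sum R a| <= 2 * n%:R.
Proof.
have hQ := hQ_aval a.
have hts_n : `|true_sum R a| <= n%:R.
  rewrite /true_sum; apply: (le_trans (ler_norm_sum _ _ _)).
  rewrite -[n in n%:R]card_ord -sum1_card natr_sum; apply: ler_sum => j _.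
  by move: (hQ j); rewrite /Qv -orbA => /or3P[] /eqP ->; rewrite ?normrN ?normr1 ?normr0.
rewrite /Apr; case: foldl => [[D z] G].
by have [_ ->] := clamp_le (D / apr_p n gamma B + G) hts_n.
Qed.
End Gen.

Section Gen.
Variable R : realType.

Definition s0 : (R * nat * R) * (R * R) := ((0, 0%N, 0), (0, 0)).
Definition finS n (thr : R) (a : stream n) (r : {ffun 'I_n -> bool}) :=
  foldl (ext_step thr) s0 [seq (aval R a j, r j) | j <- enum 'I_n].

Lemma case_p1 n (thr p t : R) (a : stream n) (E : pred {ffun 'I_n -> bool}) :
  p = 1 -> 0 < t ->
  (forall r, E r -> t < `|(finS thr a r).1.1.1 / p - (finS thr a r).2.1|) ->
  \sum_(r | E r) bern_weight p r <= 0.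
Proof.
move=> hp t0 HE.
have p01 : 0 <= p <= 1 by rewrite hp; apply/andP; split; lra.
have HE' : forall r, E r -> t <= Phi0 (R:=R) (finS thr a r).
  by move=> r /HE; rewrite hp divr1 => h; exact: ltW.
have hm := markov (Phi := fun r => Phi0 (R:=R) (finS thr a r)) p01 t0
  (fun r => normr_ge0 _) HE'.
apply: (le_trans hm); move: hm => _.
have := supermart (Phi := Phi0 (R:=R)) (Q := Qv (R:=R)) p01 _ (hQ_aval R a) s0.
rewrite /Phi0 /= subrr normr0 => h.
rewrite (_ : \sum_r _ = 0); first by rewrite mul0r.
have w0 : forall r : {ffun 'I_n -> bool}, 0 <= bern_weight p r.
  by move=> r; rewrite /bern_weight; apply: prodr_ge0 => j _; case: (r j) => //; rewrite hp; lra.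
apply/eqP; rewrite eq_le; apply/andP; split; last first.
  by apply: sumr_ge0 => r _; apply: mulr_ge0 => //; apply: normr_ge0.
apply: h => s x qx; rewrite hp; exact: Phi0_super.
Qed.


Lemma case_main n (thr p t L B K c : R) (a : stream n) (E : pred {ffun 'I_n -> bool}) :
  0 <= p <= 1 -> p = 6000 * L ^+ 2 * B / K ^+ 2 -> 1 <= L -> 0 < K -> K < B ->
  t = K / 2 -> thr = 20 * L * p * B -> 0 < c ->
  (forall v, 2 + 3 * L <= v -> c <= expR v) ->
  (forall r, E r -> t < `|(finS thr a r).1.1.1 / p - (finS thr a r).2.1|) ->
  \sum_(r | E r) bern_weight p r <= 3 / c.
Proof.
move=> p01 hpK L1 K0 KB ht hthr c0 target HE.
have p0 : 0 <= p by case/andP: p01.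
have B0 : 0 < B by lra.
have L0' : 0 < L by lra.
have thr0 : 0 <= thr.
  by rewrite hthr; apply: mulr_ge0; [apply: mulr_ge0; [apply: mulr_ge0; lra | exact: p0] | lra].
have pB : 6000 * L ^+ 2 <= p * B.
  have -> : p * B = 6000 * L ^+ 2 * (B ^+ 2 / K ^+ 2) by rewrite hpK; field; lra.
  rewrite -[X in X <= _]mulr1; apply: ler_wpM2l; first by apply: mulr_ge0; [lra | apply: sqr_ge0].
  rewrite ler_pdivlMr ?exprn_gt0 // mul1r; nra.
have p0' : 0 < p.
  rewrite hpK; apply: divr_gt0; last exact: exprn_gt0.
  by apply: mulr_gt0; [apply: mulr_gt0; [lra|apply: exprn_gt0]|].
have [lam hlam] : {lam | lam = K / (250 * L * B)} by eexists.
have [psi hpsi] : {psi | psi = 5/4 * p * lam ^+ 2} by eexists.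
have [M hM] : {M | M = 50 * L * B} by eexists.
have [kap hkap0] : {kap | kap = p * (expR (-1 * 1) - 1 - (-1 * 1))} by eexists.
have L0 : 0 <= L := ltW L0'.
have lam0 : 0 <= lam.
  by rewrite hlam; apply: divr_ge0 (ltW K0) (mulr_ge0 (mulr_ge0 _ L0) (ltW B0)).
have M0 : 0 <= M by rewrite hM; apply: (mulr_ge0 (mulr_ge0 _ L0) (ltW B0)).
have lam5 : lam <= 1/5.
  rewrite hlam ler_pdivrMr; last by apply: mulr_gt0; lra.
  nra.
have psi0 : 0 <= psi by rewrite hpsi; apply: mulr_ge0; [lra | apply: sqr_ge0].
have val1 : lam * (p * t) - psi * M = 6 * L.
  rewrite hpsi hlam hM hpK ht; field; lra.
have e1 : expR (-1) <= 1/2 :> R.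
  have h1 := expR_ge1Dx (1 : R); have h2 : expR (1 : R) * expR (-1) = 1 by rewrite -expRD subrr expR0.
  have h3 := expR_gt0 (-1 : R); nra.
have hkap : kap = p * expR (-1) by rewrite hkap0; congr (_ * _); rewrite mulr1; ring.
have Phi_ge0 : forall r, 0 <= Phi1 p lam psi (finS thr a r) + Phi2 p kap (finS thr a r).
  by move=> r; apply: addr_ge0; [apply: addr_ge0|]; apply: expR_ge0.
have HE' : forall r, E r -> c <= Phi1 p lam psi (finS thr a r) + Phi2 p kap (finS thr a r).
  move=> r /HE h.
  have hzr : ((finS thr a r).1.1.2)%:R < thr + 1 :> R by apply: ext_z => //=; lra.
  move: h hzr; case: (finS thr a r) => [[[D z] G] [P N]] /= h hzr.
  have hY : p * t < `|D - p * P|.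
    have -> : D - p * P = p * (D / p - P) by field; lra.
    by rewrite normrM (ger0_norm p0) ltr_pM2l.
  rewrite /Phi1 /Phi2 /=.
  have [hN | hN] := lerP N M.
    suff : c <= expR (lam * `|D - p * P| - psi * N).
      move=> h1; have h2 := expR_ge0 (-1 * (z%:R - p * N) - kap * N).
      case: (lerP 0 (D - p * P)) => hs.
        rewrite (ger0_norm hs) in h1.
        by have := expR_ge0 (- lam * (D - p * P) - psi * N); lra.
      rewrite (ltr0_norm hs) in h1.
      have := expR_ge0 (lam * (D - p * P) - psi * N).
      by rewrite (_ : lam * - (D - p * P) = - lam * (D - p * P)) in h1; [lra | ring].
    apply: target.
    have : lam * (p * t) <= lam * `|D - p * P| by apply: ler_wpM2l => //; lra.
    have : psi * N <= psi * M by apply: ler_wpM2l.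
    lra.
  suff : c <= expR (-1 * (z%:R - p * N) - kap * N).
    move=> h1; have := expR_ge0 (lam * (D - p * P) - psi * N).
    have := expR_ge0 (- lam * (D - p * P) - psi * N); lra.
  apply: target; rewrite hkap.
  have N0 : 0 <= N := ltW (le_lt_trans M0 hN).
  have h1 : 0 <= (p * N) * (1/2 - expR (-1)).
    by apply: mulr_ge0 (mulr_ge0 p0 N0) _; rewrite subr_ge0.
  have h2 : 0 <= p * (N - 50 * L * B).
    by apply: mulr_ge0 p0 _; rewrite subr_ge0 -hM ltW.
  have h3 : 0 <= (L - 1) * (p * B).
    by apply: mulr_ge0 (mulr_ge0 p0 (ltW B0)); rewrite subr_ge0.
  have h4 : 6000 * L <= p * B by nra.
  move: hzr; rewrite hthr => hzr.
  lra.
have hm := markov p01 c0 Phi_ge0 HE'.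
apply: (le_trans hm); move: hm => _.
have S1 := supermart (Phi := Phi1 p lam psi) (Q := Qv (R:=R)) p01
   (Phi1_super thr p01 (introT andP (conj lam0 lam5)) hpsi) (hQ_aval R a) s0.
have S2 := supermart (Phi := Phi2 p (p * (expR (-1 * 1) - 1 - (-1 * 1)))) (Q := Qv (R:=R)) p01 (Phi2_super thr p01) (hQ_aval R a) s0.
rewrite -hkap0 in S2.
rewrite /Phi1 /Phi2 /s0 /= !(mulr0, subr0, oppr0, expR0) in S1 S2.
under eq_bigr => r _ do rewrite mulrDr.
rewrite big_split /= ler_pdivrMr // divfK ?gt_eqF //.
have -> : (3 : R) = (1 + 1) + 1 by ring.
exact: lerD S1 S2.
Qed.

End Gen.

Section Gen.
Variable R : realType.

Lemma bad_small n (gamma B : R) (a : stream n) :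
  (0 < n)%N -> 4 / Num.sqrt (n%:R : R) < gamma -> gamma * Num.sqrt (n%:R) < B ->
  \sum_(r | ~~ (`|Apr gamma B a r - true_sum R a| <= gamma / 2 * Num.sqrt (n%:R)))
     bern_weight (apr_p n gamma B) r <= 1 / (n%:R ^+ 3).
Proof.
move=> n0 hg hB.
set sn := Num.sqrt (n%:R : R) in hg hB *.
have n0R : 0 < n%:R :> R by rewrite ltr0n.
have sn0 : 0 < sn by rewrite sqrtr_gt0.
have sn2 : sn ^+ 2 = n%:R by rewrite sqr_sqrtr // ltW.
have g0 : 0 < gamma by apply: lt_trans hg; rewrite divr_gt0.
set K := gamma * sn in hB *.
have K4 : 4 < K by move: hg; rewrite ltr_pdivrMr.
have B0 : 0 < B by lra.
have hgn : gamma ^+ 2 * n%:R = K ^+ 2 by rewrite /K exprMn sn2.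
set t := gamma / 2 * sn.
have ht : t = K / 2 by rewrite /t /K; ring.
set p := apr_p n gamma B.
set thr := apr_thr n gamma B.
set L := log2 (n%:R : R).
have ln2 : 0 < ln (2 : R) by apply: ln_gt0; lra.
have L0 : 0 <= L.
  by apply: divr_ge0; [apply: ln_ge0; rewrite ler1n | exact: ltW].
set X := 6000 * L ^+ 2 * B / (gamma ^+ 2 * n%:R).
have X0 : 0 <= X.
  by rewrite /X hgn; apply: divr_ge0; [apply: mulr_ge0; [apply: mulr_ge0; [lra|apply: sqr_ge0]|lra] | apply: sqr_ge0].
have hpX : p = Num.min X 1 by [].
have p01 : 0 <= p <= 1 by rewrite hpX; case: (lerP X 1) => h; apply/andP; split; lra.
have p0 : 0 <= p by case/andP: p01.
have hthr : thr = 20 * L * p * B by [].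
have thr0 : 0 <= thr by rewrite hthr; apply: mulr_ge0; [apply: mulr_ge0; [apply: mulr_ge0; lra | exact: p0] | lra].
pose s0 : (R * nat * R) * (R * R) := ((0, 0%N, 0), (0, 0)).
pose fin (r : {ffun 'I_n -> bool}) :=
  foldl (ext_step thr) s0 [seq (aval R a j, r j) | j <- enum 'I_n].
have hQ := hQ_aval R a.
have Apr_fin : forall r, Apr gamma B a r =
    Num.max (Num.min ((fin r).1.1.1 / p + (fin r).1.2) n%:R) (- n%:R).
  move=> r; rewrite /Apr -/p -/thr -[(0, 0%N, 0)]/(s0.1) -ext_proj -/(fin r).
  by case: (fin r) => [[[D z] G] [P N]].
have hts : forall r, (fin r).2.1 + (fin r).1.2 = true_sum R a.
  by move=> r; rewrite /fin ext_sum /= !addr0 big_map big_enum /= add0r.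
have hts_n : `|true_sum R a| <= n%:R.
  rewrite /true_sum; apply: (le_trans (ler_norm_sum _ _ _)).
  rewrite -[n in n%:R]card_ord -sum1_card natr_sum; apply: ler_sum => j _.
  by move: (hQ j); rewrite /Qv -orbA => /or3P[] /eqP ->; rewrite ?normrN ?normr1 ?normr0.
have herr : forall r, `|Apr gamma B a r - true_sum R a| <= `|(fin r).1.1.1 / p - (fin r).2.1| /\
                      `|Apr gamma B a r - true_sum R a| <= 2 * n%:R.
  move=> r; rewrite Apr_fin.
  have [h1 h2] := clamp_le ((fin r).1.1.1 / p + (fin r).1.2) hts_n.
  split => //; apply: (le_trans h1); rewrite -(hts r).
  rewrite (_ : (fin r).1.1.1 / p + (fin r).1.2 - ((fin r).2.1 + (fin r).1.2) =
     (fin r).1.1.1 / p - (fin r).2.1) //; ring.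
have [Kn | Kn] := lerP (4 * n%:R) K.
  rewrite big1; first by apply: divr_ge0 => //; apply: exprn_ge0; lra.
  move=> r /negP []; have [_ h] := herr r; lra.
have n2 : (1 < n)%N.
  rewrite ltn_neqAle n0 andbT; apply/negP => /eqP h1.
  by move: Kn; rewrite -h1 mulr1; lra.
have n2R : 2 <= n%:R :> R by rewrite ler_nat.
have L1 : 1 <= L.
  rewrite /L /log2 ler_pdivlMr // mul1r ler_ln ?posrE //; lra.
have lnn : ln (n%:R : R) = L * ln 2 by rewrite /L /log2 divfK // gt_eqF.
have ln3 : ln (3 : R) <= 2 by have := @le_ln1Dx R 2; rewrite (_ : 1 + 2 = 3); [apply; lra | ring].
have ln2le : ln (2 : R) <= 1 by have := @le_ln1Dx R 1; rewrite (_ : 1 + 1 = 2); [apply; lra | ring].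
have c0 : 0 < 3 * n%:R ^+ 3 :> R by apply: mulr_gt0; [lra | apply: exprn_gt0].
have target : forall v, 2 + 3 * L <= v -> 3 * n%:R ^+ 3 <= expR v.
  move=> v hv.
  have -> : 3 * n%:R ^+ 3 = expR (ln 3 + 3%:R * ln (n%:R : R)) :> R.
    by rewrite expRD expRM_natl !lnK ?posrE //; lra.
  rewrite ler_expR lnn.
  have : L * ln 2 <= L by rewrite -[X in _ <= X]mulr1 ler_wpM2l.
  lra.




have herr' : forall r, ~~ (`|Apr gamma B a r - true_sum R a| <= t) ->
    t < `|(finS thr a r).1.1.1 / p - (finS thr a r).2.1|.
  move=> r; rewrite -ltNge => hb; have [h _] := herr r; exact: (lt_le_trans hb h).
have [hX | hX] := lerP X 1; last first.
  have hp : p = 1 by rewrite hpX; case: (lerP X 1) => h //; lra.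
  have t0 : 0 < t by rewrite ht; lra.
  apply: le_trans (case_p1 hp t0 herr') _.
  by apply: divr_ge0 => //; apply: exprn_ge0; lra.
have hp : p = X by rewrite hpX; case: (lerP X 1) => h //; lra.
have hpK : p = 6000 * L ^+ 2 * B / K ^+ 2 by rewrite hp /X hgn.
have K0 : 0 < K by lra.
apply: le_trans (case_main p01 hpK L1 K0 hB ht hthr c0 target herr') _.
rewrite le_eqVlt; apply/orP; left; apply/eqP; field.
first [ exact: (lt0r_neq0 n0R) | exact: (expf_neq0 3 (lt0r_neq0 n0R)) | idtac ].
Qed.

End Gen.

Unset Implicit Arguments.

Theorem proposition4p6 (R : realType) (n : nat) (gamma B : R) :
  (0 < n)%N ->
  4 / Num.sqrt (n%:R : R) < gamma ->
  gamma * Num.sqrt (n%:R) < B ->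
  (forall a : stream n,
     1 - 1 / (n%:R ^+ 3) <=
     prob_r (apr_p n gamma B)
       (fun r => `|Apr gamma B a r - true_sum R a| <= gamma / 2 * Num.sqrt (n%:R)))
  /\
  (forall D : {ffun stream n -> R},
     (forall a, 0 <= D a) -> \sum_a D a = 1 ->
     \sum_a D a * exp_r (apr_p n gamma B) (fun r => (Apr gamma B a r - true_sum R a) ^+ 2)
       <= gamma ^+ 2 * n%:R).
Proof.
move=> n0 hg hB.
set sn := Num.sqrt (n%:R : R) in hg hB *.
set p := apr_p n gamma B.
have n0R : 0 < n%:R :> R by rewrite ltr0n.
have sn0 : 0 < sn by rewrite sqrtr_gt0.
have sn2 : sn ^+ 2 = n%:R by rewrite sqr_sqrtr // ltW.
have g0 : 0 < gamma by apply: lt_trans hg; rewrite divr_gt0.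
have K4 : 4 < gamma * sn by move: hg; rewrite ltr_pdivrMr.
have p01 : 0 <= p <= 1.
  have B0 : 0 < B by apply: lt_trans hB; exact: mulr_gt0.
  have X0 : 0 <= 6000 * log2 (n%:R : R) ^+ 2 * B / (gamma ^+ 2 * n%:R).
    by apply: divr_ge0; [apply: mulr_ge0; [apply: mulr_ge0; [lra | apply: sqr_ge0] | exact: ltW] | apply: mulr_ge0; [apply: sqr_ge0 | exact: ltW]].
  rewrite /p /apr_p; move: X0.
  move: (6000 * log2 (n%:R : R) ^+ 2 * B / (gamma ^+ 2 * n%:R)) => X X0.
  case: (lerP X 1) => h; apply/andP; split; lra.
have w0 : forall r : {ffun 'I_n -> bool}, 0 <= bern_weight p r.
  by move=> r; rewrite /bern_weight; apply: prodr_ge0 => j _; case: (r j) => //; case/andP: p01 => ? ?; lra.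
have hbad := fun a => bad_small a n0 hg hB.
split.
  move=> a; have := hbad a; rewrite -/p -/sn /prob_r => h.
  have := bern_sum1 n p; rewrite (bigID (fun r => `|Apr gamma B a r - true_sum R a| <= gamma / 2 * sn)) /=.
  lra.
move=> D D0 D1.
set c := (gamma / 2 * sn) ^+ 2 + (2 * n%:R) ^+ 2 * (1 / n%:R ^+ 3).
have hc : c <= gamma ^+ 2 * n%:R.
  have e1 : (gamma / 2 * sn) ^+ 2 = gamma ^+ 2 * n%:R / 4 by rewrite exprMn sn2; field.
  have e2 : (2 * n%:R) ^+ 2 * (1 / n%:R ^+ 3) = 4 / n%:R :> R.
    by field; exact: lt0r_neq0.
  have h4 : 4 / n%:R <= 4 :> R.
    by rewrite ler_pdivrMr // -[X in X <= _]mulr1 ler_wpM2l // ler1n.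
  have h16 : 16 < gamma ^+ 2 * n%:R.
    by rewrite -sn2 -exprMn; move: K4; move: (gamma * sn) => x hx; nra.
  rewrite /c e1 e2; lra.
apply: le_trans hc; rewrite -[X in _ <= X]mul1r -D1 mulr_suml.
apply: ler_sum => a _; apply: ler_wpM2l => //.
rewrite /exp_r (bigID (fun r => `|Apr gamma B a r - true_sum R a| <= gamma / 2 * sn)) /=.
apply: lerD.
  apply: (@le_trans _ _ (\sum_(r : {ffun 'I_n -> bool}) bern_weight p r * (gamma / 2 * sn) ^+ 2)).
    rewrite [X in _ <= X](bigID (fun r => `|Apr gamma B a r - true_sum R a| <= gamma / 2 * sn)) /=.
    rewrite -[X in X <= _]addr0; apply: lerD; last first.
      by apply: sumr_ge0 => r _; apply: mulr_ge0 => //; apply: sqr_ge0.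
    apply: ler_sum => r hr; apply: ler_wpM2l => //.
    rewrite -real_normK ?num_real // !expr2; apply: ler_pM => //; exact: normr_ge0.
  by rewrite -mulr_suml bern_sum1 mul1r.
rewrite [X in _ <= X]mulrC; apply: (@le_trans _ _ (\sum_(r | ~~ (`|Apr gamma B a r - true_sum R a| <= gamma / 2 * sn)) bern_weight p r * (2 * n%:R) ^+ 2)).
  apply: ler_sum => r _; apply: ler_wpM2l => //.
  rewrite -real_normK ?num_real // !expr2; apply: ler_pM; try exact: normr_ge0; exact: err_2n.
rewrite -mulr_suml; apply: ler_wpM2r; first by apply: sqr_ge0.
exact: hbad.
Qed.
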